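(* Let $a>0$ and $f\in\mathcal{F}(\mathbb{L}_a)$. Let $g:\mathbb{R}_{\ge0}\to\mathbb{R}$ satisfy: (1) $g$ is $a$-periodic; (2) $g(0)>0$; (3) the even extension of $g$ to $\mathbb{R}$ has an $a$-periodic Fourier series $S_N(\xi)=\sum_{k=0}^N a_k\cos(2\pi k\xi/a)$ with all coefficients $a_k\ge0$; (4) $S_N(\xi)\to g(\xi)$ for every $\xi$. Then $|g|\,f\in\mathcal{F}(\mathbb{L}_a)$.
   Context: $\mathbb{L}=\{x\in\mathbb{R}\setminus\mathbb{Q}:\ \forall n\in\mathbb{N}\ \exists q\in\mathbb{N}\text{ with }\|qx\|<q^{-n}\}$ is the set of Liouville numbers, where $\|x\|=\min_{m\in\mathbb{Z}}|x-m|$, and for $a>0$, $\mathbb{L}_a=\mathbb{L}+\frac1a\mathbb{Z}=\{x+m/a: x\in\mathbb{L},m\in\mathbb{Z}\}$. For a finite Borel measure $\mu$ on $\mathbb{R}$, $\hat\mu(\xi)=\int e^{-2\pi i x\xi}\,d\mu(x)$. For a Borel set $E\subset\mathbb{R}$, $\mathcal{P}(E)$ denotes the Borel probability measures $\mu$ on $\mathbb{R}$ with $\mu(\mathbb{R}\setminus E)=0$. For a function $f$ with values in $\mathbb{R}_{\ge0}$ defined at least on $[M_0,\infty)$ for some $M_0$, we write $f\in\mathcal{F}(E)$ if there exist $\mu\in\mathcal{P}(E)$ and constants $c,M>0$ such that $|\hat\mu(\xi)|\le c\,f(|\xi|)$ for all $\xi\in\mathbb{R}$ with $|\xi|\ge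 M$. *)

(* Defs.v *)
From HB Require Import structures.
From mathcomp Require Import all_boot all_order all_algebra.
From mathcomp Require Import all_classical all_reals all_analysis.
Set Implicit Arguments. Unset Strict Implicit. Unset Printing Implicit Defensive.
Import Order.TTheory GRing.Theory Num.Theory.
Import numFieldNormedType.Exports.
Local Open Scope classical_set_scope.
Local Open Scope ring_scope.

Section Defs.
Variable R : realType.

Definition distZ (x : R) : R :=
  Num.min (x - (Num.floor x)%:~R) ((Num.floor x + 1)%:~R - x).

Definition irrational (x : R) : Prop := ~ exists q : rat, x = ratr q.

(* Liouville numbers (denominators q >= 2, the standard convention) *)
Definition Liouville : set R :=
  [set x | irrational x /\
     forall n : nat, exists q : nat, (2 <= q)%N /\ distZ (q%:R * x) < (q%:R ^- n)].

Definition Liouville_a (a : R) : set R :=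
  [set y | exists x m, Liouville x /\ y = x + m%:~R / a].

(* real and imaginary parts of hat mu (xi) = int e^{-2 pi i x xi} d mu(x) *)
Definition ft_re (mu : probability R R) (xi : R) : R :=
  Rintegral mu setT (fun x => cos (2 * pi * x * xi)).
Definition ft_im (mu : probability R R) (xi : R) : R :=
  - Rintegral mu setT (fun x => sin (2 * pi * x * xi)).
Definition ft_abs (mu : probability R R) (xi : R) : R :=
  Num.sqrt (ft_re mu xi ^+ 2 + ft_im mu xi ^+ 2).

Definition prob_on (E : set R) (mu : probability R R) : Prop :=
  mu (~` E) = 0%E.

Definition inF (E : set R) (f : R -> R) : Prop :=
  (exists M0 : R, forall x, M0 <= x -> 0 <= f x) /\
  exists (mu : probability R R) (c M : R),
    [/\ prob_on E mu, 0 < c, 0 < M &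
      forall xi, M <= `|xi| -> ft_abs mu xi <= c * f `|xi|].

Definition even_ext (g : R -> R) : R -> R := fun x => g `|x|.

Definition fcoef (a : R) (g : R -> R) (k : nat) : R :=
  (if k == 0%N then a^-1 else 2 / a) *
  Rintegral lebesgue_measure `[- (a / 2), a / 2]
    (fun x => even_ext g x * cos (2 * pi * k%:R * x / a)).

Definition fpartial (a : R) (g : R -> R) (N : nat) (xi : R) : R :=
  \sum_(0 <= k < N.+1) fcoef a g k * cos (2 * pi * k%:R * xi / a).

End Defs.

(* Main.v *)
Require Import Defs.
From HB Require Import structures.
From mathcomp Require Import all_boot all_order all_algebra.
From mathcomp Require Import all_classical all_reals all_analysis.
From mathcomp Require Import measurable_realfun ring lra.
Import Order.TTheory GRing.Theory Num.Theory.
Import numFieldNormedType.Exports.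
Local Open Scope classical_set_scope.
Local Open Scope ring_scope.

Section Shift.
Context {R : realType}.
Definition shf (t : R) : R -> R := fun x => x + t.
Lemma shf_meas (t : R) : measurable_fun setT (shf t).
Proof. by apply: measurable_funD => //; exact: measurable_cst. Qed.
HB.instance Definition _ (t : R) := isMeasurableFun.Build _ _ R R (shf t) (shf_meas t).
End Shift.

Section Helpers.
Context {R : realType}.
Local Open Scope ereal_scope.

Lemma bdd_int (P : probability R R) (h : R -> R) :
  measurable_fun setT h -> (forall x, `|h x| <= 1)%R ->
  P.-integrable setT (EFin \o h).
Proof.
move=> mh hb; apply: (le_integrable _ _ _ (finite_measure_integrable_cst P 1 _)) => //.
  exact/measurable_EFinP.
by move=> x _ /=; rewrite lee_fin normr1.
Qed.

Lemma int_mscale_dist (P : probability R R) (r : {nonneg R}) (X : {mfun R >-> R})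
   (h : R -> R) :
  measurable_fun setT h -> (forall x, `|h x| <= 1)%R ->
  \int[mscale r (distribution P X)]_(x in setT) (h x)%:E =
  (r%:num * \int[P]_(x in setT) h (X x))%:E.
Proof.
move=> mh hb.
have mhE : measurable_fun setT (EFin \o h) by exact/measurable_EFinP.
have iD := bdd_int (distribution P X) h mh hb.
have iP : P.-integrable setT (EFin \o (h \o X)).
  apply: bdd_int => //; first (apply: measurableT_comp => //; exact: measurable_funP).
  by move=> x; exact: hb.
rewrite integralE ge0_integral_mscale//; last exact: measurable_funepos.
rewrite ge0_integral_mscale//; last exact: measurable_funeneg.
rewrite -muleBr//; last first.
  by apply: fin_num_adde_defl; rewrite fin_numN; apply: integrable_neg_fin_num.

rewrite -integralE integral_distribution//.
rewrite EFinM; congr (_ * _).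
rewrite /Rintegral fineK//.
exact: (integrable_fin_num _ iP).
Qed.
Lemma bdd_intm (m : {measure set R -> \bar R}) (h : R -> R) :
  m setT < +oo ->
  measurable_fun setT h -> (forall x, `|h x| <= 1)%R ->
  m.-integrable setT (EFin \o h).
Proof.
move=> mfin mh hb; apply/integrableP; split; first exact/measurable_EFinP.
apply: (@le_lt_trans _ _ (\int[m]_(x in setT) (cst 1%E x))).
  apply: ge0_le_integral => //.
  - by apply: measurableT_comp => //; exact/measurable_EFinP.
  - by move=> x _; rewrite /= lee_fin.
by rewrite integral_cst// mul1e.
Qed.

Lemma ser_EFin (u : nat -> R) (l : R) : (series u @ \oo --> l)%R ->
  \sum_(k <oo) (u k)%:E = l%:E.
Proof.
move=> hu.
rewrite (_ : (fun n => _) = EFin \o series u); last first.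
  by apply/funext => n; rewrite /= sumEFin.
by rewrite EFin_lim; [rewrite (cvg_lim _ hu) | exact: cvgP hu].
Qed.

Lemma abs_ser_cvg (u w : nat -> R) : (forall k, `|u k| <= w k)%R ->
  cvgn (series w) -> cvgn (series u).
Proof.
move=> uw cw; apply: normed_cvg.
apply: (@series_le_cvg _ _ w) => // k.
- exact: normr_ge0.
- exact: le_trans (normr_ge0 _) (uw k).
Qed.

Lemma Rint_bdd (P : probability R R) (h : R -> R) :
  measurable_fun setT h -> (forall x, `|h x| <= 1)%R ->
  (`|\int[P]_(x in setT) h x| <= 1)%R.
Proof.
move=> mh hb.
have ih := bdd_int P h mh hb.
apply: (le_trans (le_normr_Rintegral _ ih)) => //.
apply: (@le_trans _ _ (\int[P]_(x in setT) (1:R))%R).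
  apply: le_Rintegral => //.
  - apply: bdd_int => //; first exact: measurableT_comp.
    by move=> x; rewrite normr_id.
  - apply: bdd_int => //; by move=> x; rewrite normr1.
rewrite Rintegral_cst//.
have e := congr1 fine (probability_setT P); rewrite /= in e.
by rewrite mul1r -[X in (_ <= X)%R]e.
Qed.

Lemma eneg_le1 (h : R -> R) : (forall x, `|h x| <= 1)%R ->
  forall x, (EFin \o h)^\- x <= 1.
Proof.
move=> hb x; rewrite funenegE /= ge_max lee01 andbT lee_fin.
by have := hb x; rewrite ler_norml => /andP[+ _]; rewrite lerNl.
Qed.

Lemma epos_le1 (h : R -> R) : (forall x, `|h x| <= 1)%R ->
  forall x, (EFin \o h)^\+ x <= 1.
Proof.
move=> hb x; rewrite funeposE /= ge_max lee01 andbT lee_fin.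
by have := hb x; rewrite ler_norml => /andP[_ ->].
Qed.

Lemma int_le_mass (m : {measure set R -> \bar R}) (f : R -> \bar R) :
  measurable_fun setT f -> (forall x, 0 <= f x <= 1) ->
  `|\int[m]_(x in setT) f x| <= m setT.
Proof.
move=> mf f01.
rewrite gee0_abs; last by apply: integral_ge0 => x _; have /andP[] := f01 x.
apply: (@le_trans _ _ (\int[m]_(x in setT) (cst 1%E x))).
  apply: ge0_le_integral => //.
  - by move=> x _; have /andP[] := f01 x.
  - by move=> x _; have /andP[] := f01 x.
by rewrite integral_cst// mul1e.
Qed.

End Helpers.

Section Nu.
Variables (R : realType) (mu : probability R R) (a : R) (w : nat -> R).
Hypothesis w0 : forall k, 0 <= w k.
Hypothesis wsum : series w @ \oo --> (2^-1 : R).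

Definition wnn k : {nonneg R} := NngNum (w0 k).
Definition mp k := mscale (wnn k) (distribution mu (shf (k%:R / a))).
Definition mm k := mscale (wnn k) (distribution mu (shf (- (k%:R / a)))).
Definition nup := mseries mp 0.
Definition num := mseries mm 0.
Definition nu := measure_add nup num.

Local Open Scope ereal_scope.

Lemma mp_setT k : mp k setT = (w k)%:E.
Proof. by rewrite /mp /mscale /= probability_setT mule1. Qed.
Lemma mm_setT k : mm k setT = (w k)%:E.
Proof. by rewrite /mm /mscale /= probability_setT mule1. Qed.

Lemma nup_setT : nup setT = (2^-1)%:E.
Proof.
rewrite -(ser_EFin _ _ wsum); congr (limn _); apply/funext => n.
by apply: eq_bigr => k _; exact: mp_setT.
Qed.
Lemma num_setT : num setT = (2^-1)%:E.
Proof.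
rewrite -(ser_EFin _ _ wsum); congr (limn _); apply/funext => n.
by apply: eq_bigr => k _; exact: mm_setT.
Qed.

Lemma nu1 : nu setT = 1%E.
Proof.
rewrite /nu measure_addE.
transitivity ((2^-1)%:E + (2^-1)%:E : \bar R).
  by congr (_ + _); [exact: nup_setT | exact: num_setT].
by rewrite -EFinD; congr EFin; field.
Qed.

HB.instance Definition _ := Measure.copy nu (measure_add nup num).
HB.instance Definition _ := Measure_isProbability.Build _ _ _ nu nu1.
Definition nuP : probability R R := nu.

Lemma nu_null (A : set R) : mu A = 0 ->
  (forall (t : R), (exists k : nat, t = (k%:R / a)%R \/ t = (- (k%:R / a))%R) ->
     forall x : R, A (x + t)%R <-> A x) -> nu A = 0.
Proof.
move=> muA hA; rewrite /nu measure_addE.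
have h1 : nup A = 0.
  rewrite /nup /mseries; apply: eseries0 => k _ _.
  transitivity ((w k)%:E * mu A); last by rewrite muA mule0.
  rewrite /mp /mscale /distribution /pushforward /=; congr (_ * mu _).
  by apply/seteqP; split => x /=; rewrite /shf; apply hA; exists k; left.
have h2 : num A = 0.
  rewrite /num /mseries; apply: eseries0 => k _ _.
  transitivity ((w k)%:E * mu A); last by rewrite muA mule0.
  rewrite /mm /mscale /distribution /pushforward /=; congr (_ * mu _).
  by apply/seteqP; split => x /=; rewrite /shf; apply hA; exists k; right.
transitivity (0 + 0 : \bar R); last exact: adde0.
by congr (_ + _); [exact: h1 | exact: h2].
Qed.

Section Integ.
Variable h : R -> R.
Hypothesis mh : measurable_fun setT h.
Hypothesis hb : forall x, (`|h x| <= 1)%R.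

Definition Hp k := (\int[mu]_(x in setT) h (x + k%:R / a))%R.
Definition Hm k := (\int[mu]_(x in setT) h (x + - (k%:R / a)))%R.

Lemma Hp_bdd k : (`|Hp k| <= 1)%R.
Proof.
apply: Rint_bdd => //; apply: measurableT_comp => //; exact: (shf_meas (k%:R/a)%R).
Qed.
Lemma Hm_bdd k : (`|Hm k| <= 1)%R.
Proof.
apply: Rint_bdd => //; apply: measurableT_comp => //; exact: (shf_meas (- (k%:R/a))%R).
Qed.

Lemma cvg_w : cvgn (series w).
Proof. exact: cvgP wsum. Qed.

Lemma cvg_p : cvgn (series (fun k => w k * Hp k)%R).
Proof.
apply: (@abs_ser_cvg _ _ w _ cvg_w) => k.
rewrite normrM ger0_norm//; apply: ler_piMr => //; exact: Hp_bdd.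
Qed.
Lemma cvg_m : cvgn (series (fun k => w k * Hm k)%R).
Proof.
apply: (@abs_ser_cvg _ _ w _ cvg_w) => k.
rewrite normrM ger0_norm//; apply: ler_piMr => //; exact: Hm_bdd.
Qed.

Lemma sum_w_fin : \sum_(k <oo) (w k)%:E < +oo.
Proof. by rewrite (ser_EFin _ _ wsum) ltry. Qed.

Lemma int_nup : \int[nup]_(x in setT) (h x)%:E =
  (limn (series (fun k => w k * Hp k)%R))%:E.
Proof.
have mhE : measurable_fun setT (EFin \o h) by exact/measurable_EFinP.
rewrite /nup integral_measure_series//.
- rewrite (_ : (fun n => _) = EFin \o series (fun k => w k * Hp k)%R).
    by rewrite EFin_lim//; exact: cvg_p.
  apply/funext => n /=; rewrite -sumEFin; apply: eq_bigr => k _.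
  exact: int_mscale_dist.
- move=> n; apply: bdd_intm => //.
  have e := mp_setT n; apply: (@le_lt_trans _ _ (w n)%:E); last exact: ltry.
  by rewrite -e.
- apply: le_lt_trans sum_w_fin; apply: lee_nneseries => // n _.
  have -> : (w n)%:E = mp n setT by rewrite mp_setT.
  apply: int_le_mass; first exact: measurable_funeneg.
  by move=> x; rewrite funeneg_ge0 eneg_le1.
- apply: le_lt_trans sum_w_fin; apply: lee_nneseries => // n _.
  have -> : (w n)%:E = mp n setT by rewrite mp_setT.
  apply: int_le_mass; first exact: measurable_funepos.
  by move=> x; rewrite funepos_ge0 epos_le1.
Qed.

Lemma int_num : \int[num]_(x in setT) (h x)%:E =
  (limn (series (fun k => w k * Hm k)%R))%:E.
Proof.
have mhE : measurable_fun setT (EFin \o h) by exact/measurable_EFinP.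
rewrite /num integral_measure_series//.
- rewrite (_ : (fun n => _) = EFin \o series (fun k => w k * Hm k)%R).
    by rewrite EFin_lim//; exact: cvg_m.
  apply/funext => n /=; rewrite -sumEFin; apply: eq_bigr => k _.
  exact: int_mscale_dist.
- move=> n; apply: bdd_intm => //.
  have e := mm_setT n; apply: (@le_lt_trans _ _ (w n)%:E); last exact: ltry.
  by rewrite -e.
- apply: le_lt_trans sum_w_fin; apply: lee_nneseries => // n _.
  have -> : (w n)%:E = mm n setT by rewrite mm_setT.
  apply: int_le_mass; first exact: measurable_funeneg.
  by move=> x; rewrite funeneg_ge0 eneg_le1.
- apply: le_lt_trans sum_w_fin; apply: lee_nneseries => // n _.
  have -> : (w n)%:E = mm n setT by rewrite mm_setT.
  apply: int_le_mass; first exact: measurable_funepos.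
  by move=> x; rewrite funepos_ge0 epos_le1.
Qed.


Lemma int_nu (l : R) : series (fun k => w k * (Hp k + Hm k))%R @ \oo --> l ->
  \int[nu]_(x in setT) (h x)%:E = l%:E.
Proof.
move=> hl.
rewrite /nu integral_measure_add//; last 2 first.
- apply: bdd_intm => //.
  have e := nup_setT; apply: (@le_lt_trans _ _ (2^-1)%:E); last exact: ltry.
  by rewrite -e.
- apply: bdd_intm => //.
  have e := num_setT; apply: (@le_lt_trans _ _ (2^-1)%:E); last exact: ltry.
  by rewrite -e.
rewrite int_nup int_num -EFinD; congr EFin.
rewrite -lim_seriesD; [|exact: cvg_p|exact: cvg_m].
apply: cvg_lim => //.
rewrite (_ : ((fun k => w k * Hp k) + (fun k => w k * Hm k))%R =
   (fun k => w k * (Hp k + Hm k))%R) //.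
by apply/funext => k /=; rewrite mulrDr.
Qed.

End Integ.


Section FT.
Local Open Scope ring_scope.
Variable xi : R.

Lemma meas_trig (f : R -> R) : continuous f ->
  measurable_fun setT (fun x : R => f (2 * pi * x * xi)).
Proof.
move=> cf; apply: measurableT_comp; first exact: continuous_measurable_fun.
apply: measurable_funM => //; apply: measurable_funM => //; exact: measurable_cst.
Qed.

Let mc := @meas_trig cos (@continuous_cos R).
Let ms := @meas_trig sin (@continuous_sin R).

Lemma bdd_prod (f : R -> R) (c : R) : continuous f ->
  (forall x, `|f x| <= 1) -> `|c| <= 1 ->
  mu.-integrable setT (EFin \o (fun x => f (2 * pi * x * xi) * c)).
Proof.
move=> cf fb cb; apply: bdd_int; last by move=> x; rewrite normrM mulr_ile1.
by apply: measurable_funM; [exact: meas_trig | exact: measurable_cst].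
Qed.

Definition Aft := \int[mu]_(x in setT) cos (2 * pi * x * xi).
Definition Bft := \int[mu]_(x in setT) sin (2 * pi * x * xi).

Lemma Rint_cos_shift (t : R) :
  \int[mu]_(x in setT) cos (2 * pi * (x + t) * xi) =
  cos (2 * pi * t * xi) * Aft - sin (2 * pi * t * xi) * Bft.
Proof.
rewrite (@eq_Rintegral _ _ _ _ _
  (fun x => cos (2 * pi * x * xi) * cos (2 * pi * t * xi) -
            sin (2 * pi * x * xi) * sin (2 * pi * t * xi))); last first.
  by move=> x _; rewrite -cosD; congr cos; ring.
rewrite RintegralB //; last 2 first.
- by apply: (bdd_prod cos) => //; [exact: continuous_cos | exact: cos_max | exact: cos_max].
- by apply: (bdd_prod sin) => //; [exact: continuous_sin | exact: sin_max | exact: sin_max].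
rewrite !RintegralZr //; last 2 first.
- first [by apply: bdd_int => // x; exact: cos_max | by apply: bdd_int => // x; exact: sin_max].
- first [by apply: bdd_int => // x; exact: cos_max | by apply: bdd_int => // x; exact: sin_max].
by rewrite /Aft /Bft; ring.
Qed.

Lemma Rint_sin_shift (t : R) :
  \int[mu]_(x in setT) sin (2 * pi * (x + t) * xi) =
  cos (2 * pi * t * xi) * Bft + sin (2 * pi * t * xi) * Aft.
Proof.
rewrite (@eq_Rintegral _ _ _ _ _
  (fun x => sin (2 * pi * x * xi) * cos (2 * pi * t * xi) +
            cos (2 * pi * x * xi) * sin (2 * pi * t * xi))); last first.
  by move=> x _; rewrite -sinD; congr sin; ring.
rewrite RintegralD //; last 2 first.
- by apply: (bdd_prod sin) => //; [exact: continuous_sin | exact: sin_max | exact: cos_max].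
- by apply: (bdd_prod cos) => //; [exact: continuous_cos | exact: cos_max | exact: sin_max].
rewrite !RintegralZr //; last 2 first.
- first [by apply: bdd_int => // x; exact: cos_max | by apply: bdd_int => // x; exact: sin_max].
- first [by apply: bdd_int => // x; exact: cos_max | by apply: bdd_int => // x; exact: sin_max].
by rewrite /Aft /Bft; ring.
Qed.

Variable G : R.
Hypothesis hG :
  series (fun k => w k * (2 * cos (2 * pi * k%:R * xi / a))) @ \oo --> G.

Lemma ser_scale (c : R) (u : nat -> R) :
  series (fun k => c * u k) = (fun n => c * series u n).
Proof. by apply/funext => n; rewrite /series /= mulr_sumr. Qed.

Lemma ftre_nu : ft_re nuP xi = G * ft_re mu xi.
Proof.
have hl : series (fun k => w k * (Hp (fun x => cos (2 * pi * x * xi)) k +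
                                  Hm (fun x => cos (2 * pi * x * xi)) k))
          @ \oo --> Aft * G.
  rewrite (_ : (fun k => _) = (fun k => Aft * (w k * (2 * cos (2 * pi * k%:R * xi / a))))).
    by rewrite ser_scale; exact: cvgMl_tmp.
  apply/funext => k; rewrite /Hp /Hm /=.
  rewrite !Rint_cos_shift.
  have -> : 2 * pi * - (k%:R / a) * xi = - (2 * pi * (k%:R / a) * xi) by ring.
  rewrite cosN sinN.
  have -> : 2 * pi * (k%:R / a) * xi = 2 * pi * k%:R * xi / a by ring.
  ring.
have e := int_nu _ mc (fun x => cos_max _) _ hl.
rewrite /ft_re /Rintegral /nuP e /= mulrC //.
Qed.

Lemma ftim_nu : ft_im nuP xi = G * ft_im mu xi.
Proof.
have hl : series (fun k => w k * (Hp (fun x => sin (2 * pi * x * xi)) k +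
                                  Hm (fun x => sin (2 * pi * x * xi)) k))
          @ \oo --> Bft * G.
  rewrite (_ : (fun k => _) = (fun k => Bft * (w k * (2 * cos (2 * pi * k%:R * xi / a))))).
    by rewrite ser_scale; exact: cvgMl_tmp.
  apply/funext => k; rewrite /Hp /Hm /=.
  rewrite !Rint_sin_shift.
  have -> : 2 * pi * - (k%:R / a) * xi = - (2 * pi * (k%:R / a) * xi) by ring.
  rewrite cosN sinN.
  have -> : 2 * pi * (k%:R / a) * xi = 2 * pi * k%:R * xi / a by ring.
  ring.
have e := int_nu _ ms (fun x => sin_max _) _ hl.
rewrite /ft_im /Rintegral /nuP e /= mulrN mulrC //.
Qed.

Lemma ftabs_nu : ft_abs nuP xi = `|G| * ft_abs mu xi.
Proof.
rewrite /ft_abs ftre_nu ftim_nu !exprMn -mulrDr sqrtrM ?sqr_ge0//.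
by rewrite sqrtr_sqr.
Qed.

End FT.
End Nu.

Section Main.
Local Open Scope ring_scope.
Context {R : realType}.

Lemma La_shift (a : R) (z : int) (x : R) :
  Liouville_a a x -> Liouville_a a (x + z%:~R / a).
Proof.
case=> l [m [hl ->]]; exists l, (m + z); split => //.
by rewrite intrD mulrDl addrA.
Qed.

Lemma La_inv (a : R) (t : R) :
  (exists k : nat, t = k%:R / a \/ t = - (k%:R / a)) ->
  forall x, (~` Liouville_a a) (x + t) <-> (~` Liouville_a a) x.
Proof.
case=> k hk x.
have [z1 [z2 [e1 e2]]] : exists z1 z2 : int, t = z1%:~R / a /\ - t = z2%:~R / a.
  case: hk => ->.
  - exists k%:Z, (- k%:Z); split; first by rewrite pmulrn.
    by rewrite mulrNz pmulrn mulNr.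
  - exists (- k%:Z), k%:Z; split; last by rewrite opprK pmulrn.
    by rewrite mulrNz pmulrn mulNr.
split => /= hn hE; apply: hn.
- by rewrite e1; exact: La_shift.
- by have := @La_shift a z2 _ hE; rewrite -e2 addrK.
Qed.

End Main.

Theorem proposition3p3 (R : realType) (a : R) (f g : R -> R) :
  0 < a ->
  inF (Liouville_a a) f ->
  (forall x, 0 <= x -> g (x + a) = g x) ->
  0 < g 0 ->
  lebesgue_measure.-integrable `[- (a / 2), a / 2] (EFin \o even_ext g) ->
  (forall k, 0 <= fcoef a g k) ->
  (forall xi, (fun N => fpartial a g N xi) @ \oo --> even_ext g xi) ->
  inF (Liouville_a a) (fun x => `|g x| * f x).
Proof.
move=> a0 [[M0 fnn] [mu [c [M [pmu c0 M0' hf]]]]] gper g0 gint fc0 gcvg.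
set G0 := g 0.
set w := fun k => fcoef a g k / (2 * G0).
have w0 : forall k, 0 <= w k.
  by move=> k; rewrite /w divr_ge0// mulr_ge0// ltW.
have ser_fp : forall xi n,
    series (fun k => w k * (2 * cos (2 * pi * k%:R * xi / a))) n.+1 =
    fpartial a g n xi / G0.
  move=> xi n; rewrite /series /= /fpartial mulr_suml; apply: eq_bigr => k _.
  rewrite /w; field; rewrite gt_eqF//.
have hG : forall xi,
    series (fun k => w k * (2 * cos (2 * pi * k%:R * xi / a))) @ \oo -->
    g `|xi| / G0.
  move=> xi; rewrite -cvg_shiftS /=.
  under eq_fun do rewrite ser_fp.
  exact: cvgMr_tmp (gcvg xi).
have wsum : series w @ \oo --> (2^-1 : R).
  have h0 := hG 0; rewrite normr0 -/G0 divff ?gt_eqF// in h0.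
  rewrite (_ : series w = fun n => series (fun k => w k * (2 * cos (2 * pi * k%:R * 0 / a))) n * 2^-1).
    by rewrite -[X in _ --> X]mul1r; exact: cvgMr_tmp h0.
  apply/funext => n; rewrite /series /= mulr_suml; apply: eq_bigr => k _.
  by rewrite mulr0 mul0r cos0 mulr1; field.
split.
  by exists M0 => x hx; rewrite mulr_ge0 // fnn.
exists (nuP _ mu a _ w0 wsum), (c / G0), M; split => //.
- by apply: nu_null => //; exact: La_inv.
- by rewrite divr_gt0.
move=> xi hxi.
rewrite (ftabs_nu _ _ _ _ w0 wsum xi _ (hG xi)) normrM (@gtr0_norm _ (G0^-1)); last by rewrite invr_gt0.
apply: (@le_trans _ _ (`|g (`|xi|)| / G0 * (c * f (`|xi|)))).
  by apply: ler_wpM2l; [rewrite divr_ge0// ltW | exact: hf].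
by rewrite le_eqVlt; apply/orP; left; apply/eqP; ring.
Qed.
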